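(* Let $X,Y$ be real Hilbert spaces and $a:X\times Y\to\mathbb{R}\cup\{+\infty\}$ such that for every $y\in Y$ the function $a(\cdot,y)$ is proper, lower semicontinuous and paraconvex on $X$, and for every $x\in X$ the function $a(x,\cdot)$ is concave on $Y$. Assume $\beta:=\inf_{x\in X}\sup_{y\in Y}a(x,y)<+\infty$. If there exist $y_1,y_2\in Y$ and $\bar x\in\mathrm{int}\,\mathrm{dom}\,a(\cdot,y_1)\cap\mathrm{int}\,\mathrm{dom}\,a(\cdot,y_2)$ with $a(\bar x,y_1)\ge\beta$, $a(\bar x,y_2)\ge\beta$ such that $a(\cdot,y_1)$ and $a(\cdot,y_2)$ satisfy $ZS(0,\bar x)$, then $\sup_{y\in Y}\inf_{x\in X}a(x,y)=\inf_{x\in X}\sup_{y\in Y}a(x,y)$.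
   Context: A function $f:X\to\mathbb{R}\cup\{+\infty\}$ is paraconvex if there is $c>0$ such that $f+c\|\cdot\|^2$ is convex; proper means $\mathrm{dom}(f)=\{x:f(x)<+\infty\}\ne\emptyset$ and $f$ is minorized by some function $x\mapsto-a\|x\|^2+\langle v,x\rangle+c$ with $a\ge0$, $v\in X^*$, $c\in\mathbb{R}$. $\partial_{lsc}f(\bar x)$ is the set of $(a,v)\in\mathbb{R}_+\times X^*$ with $f(x)-f(\bar x)\ge\langle v,x-\bar x\rangle-a\|x\|^2+a\|\bar x\|^2$ for all $x\in X$. Functions $f,g$ satisfy $ZS(0,\bar x)$ if $0=(0,0)\in\mathrm{co}(\partial_{lsc}f(\bar x)\cup\partial_{lsc}g(\bar x))$, convex hull in $\mathbb{R}\times X^*$. *)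

(* Defs.v *)
From Stdlib Require Import Reals List.
Import ListNotations.
Open Scope R_scope.

Record Hilbert := mkHilbert {
  hcar :> Type;
  hzero : hcar;
  hadd : hcar -> hcar -> hcar;
  hopp : hcar -> hcar;
  hscal : R -> hcar -> hcar;
  hinner : hcar -> hcar -> R;
  hadd_assoc : forall x y z, hadd x (hadd y z) = hadd (hadd x y) z;
  hadd_comm : forall x y, hadd x y = hadd y x;
  hadd_0 : forall x, hadd x hzero = x;
  hadd_opp : forall x, hadd x (hopp x) = hzero;
  hscal_1 : forall x, hscal 1 x = x;
  hscal_assoc : forall a b x, hscal a (hscal b x) = hscal (a * b) x;
  hscal_distr_l : forall a x y, hscal a (hadd x y) = hadd (hscal a x) (hscal a y);
  hscal_distr_r : forall a b x, hscal (a + b) x = hadd (hscal a x) (hscal b x);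
  hinner_sym : forall x y, hinner x y = hinner y x;
  hinner_add : forall x y z, hinner (hadd x y) z = hinner x z + hinner y z;
  hinner_scal : forall a x y, hinner (hscal a x) y = a * hinner x y;
  hinner_pos : forall x, 0 <= hinner x x;
  hinner_def : forall x, hinner x x = 0 -> x = hzero;
  hcomplete : forall u : nat -> hcar,
    (forall eps, 0 < eps -> exists N, forall m n, (N <= m)%nat -> (N <= n)%nat ->
        sqrt (hinner (hadd (u m) (hopp (u n))) (hadd (u m) (hopp (u n)))) < eps) ->
    exists l, forall eps, 0 < eps -> exists N, forall n, (N <= n)%nat ->
        sqrt (hinner (hadd (u n) (hopp l)) (hadd (u n) (hopp l))) < eps
}.

Arguments hzero {_}. Arguments hadd {_}. Arguments hopp {_}.
Arguments hscal {_}. Arguments hinner {_}.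

Definition hsub {X : Hilbert} (x y : X) : X := hadd x (hopp y).
Definition hnorm {X : Hilbert} (x : X) : R := sqrt (hinner x x).

Definition is_dual {X : Hilbert} (v : X -> R) : Prop :=
  (forall x y, v (hadd x y) = v x + v y) /\
  (forall t x, v (hscal t x) = t * v x) /\
  (exists M, forall x, Rabs (v x) <= M * hnorm x).

Inductive ERbar := EFin (r : R) | EPinf | EMinf.

Definition ERle (x y : ERbar) : Prop :=
  match x, y with
  | EMinf, _ => True
  | _, EPinf => True
  | EFin a, EFin b => a <= b
  | _, _ => False
  end.

Definition ERlt (x y : ERbar) : Prop := ERle x y /\ x <> y.

Definition ERplusR (x : ERbar) (r : R) : ERbar :=
  match x with EFin a => EFin (a + r) | e => e end.

Definition is_sup (S : ERbar -> Prop) (l : ERbar) : Prop :=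
  (forall z, S z -> ERle z l) /\
  (forall u, (forall z, S z -> ERle z u) -> ERle l u).

Definition is_inf (S : ERbar -> Prop) (l : ERbar) : Prop :=
  (forall z, S z -> ERle l z) /\
  (forall u, (forall z, S z -> ERle u z) -> ERle u l).

Section Fun.
Context {X : Hilbert}.

Definition dom (f : X -> ERbar) (x : X) : Prop := f x <> EPinf.

(* convexity of an extended-valued function, through its epigraph *)
Definition convex (f : X -> ERbar) : Prop :=
  forall x z t r s, 0 <= t <= 1 -> ERle (f x) (EFin r) -> ERle (f z) (EFin s) ->
    ERle (f (hadd (hscal t x) (hscal (1 - t) z))) (EFin (t * r + (1 - t) * s)).

(* concavity, through the hypograph *)
Definition concave (f : X -> ERbar) : Prop :=
  forall x z t r s, 0 <= t <= 1 -> ERle (EFin r) (f x) -> ERle (EFin s) (f z) ->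
    ERle (EFin (t * r + (1 - t) * s)) (f (hadd (hscal t x) (hscal (1 - t) z))).

Definition paraconvex (f : X -> ERbar) : Prop :=
  exists c, 0 < c /\ convex (fun x => ERplusR (f x) (c * (hnorm x) ^ 2)).

Definition proper (f : X -> ERbar) : Prop :=
  (exists x, dom f x) /\
  (exists (a : R) (v : X -> R) (c : R), 0 <= a /\ is_dual v /\
     forall x, ERle (EFin (- a * (hnorm x) ^ 2 + v x + c)) (f x)).

Definition lsc (f : X -> ERbar) : Prop :=
  forall x r, ERlt (EFin r) (f x) ->
    exists eps, 0 < eps /\ forall z, hnorm (hsub z x) < eps -> ERlt (EFin r) (f z).

Definition in_int_dom (f : X -> ERbar) (x : X) : Prop :=
  exists eps, 0 < eps /\ forall z, hnorm (hsub z x) < eps -> dom f z.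

Definition lsc_subdiff (f : X -> ERbar) (xbar : X) (a : R) (v : X -> R) : Prop :=
  0 <= a /\ is_dual v /\
  exists fx, f xbar = EFin fx /\
    forall x, ERle (EFin (fx + v (hsub x xbar) - a * (hnorm x) ^ 2 + a * (hnorm xbar) ^ 2)) (f x).

(** ZS(0, xbar): (0,0) in the convex hull (finite convex combinations) of
    ∂_lsc f(xbar) ∪ ∂_lsc g(xbar) in R × X^*. *)
Definition ZS (f g : X -> ERbar) (xbar : X) : Prop :=
  exists l : list (R * R * (X -> R)),
    Forall (fun p => let '(lam, a, v) := p in
              0 <= lam /\ (lsc_subdiff f xbar a v \/ lsc_subdiff g xbar a v)) l /\
    fold_right (fun p acc => let '(lam, _, _) := p in lam + acc) 0 l = 1 /\
    fold_right (fun p acc => let '(lam, a, _) := p in lam * a + acc) 0 l = 0 /\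
    forall x, fold_right (fun p acc => let '(lam, _, v) := p in lam * v x + acc) 0 l = 0.

End Fun.

(* Main.v *)
Require Import Defs.
From Stdlib Require Import Reals List Lra.
Open Scope R_scope.

Lemma ERle_trans x y z : ERle x y -> ERle y z -> ERle x z.
Proof. destruct x, y, z; simpl; intros; try lra; tauto. Qed.

Lemma ex_below e : e <> EMinf -> exists r, ERle (EFin r) e.
Proof.
  destruct e; intros H; [exists r; simpl; lra | exists 0; simpl; auto | congruence].
Qed.

Lemma norm_sub_self (X : Hilbert) (x : X) : hnorm (hsub x x) = 0.
Proof.
  unfold hnorm, hsub. rewrite hadd_opp.
  assert (H := hinner_add X hzero hzero hzero). rewrite hadd_0 in H.
  replace (hinner (@hzero X) hzero) with 0 by lra. apply sqrt_0.
Qed.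

Lemma sum_lin (X : Hilbert) (xbar x : X) (l : list (R * R * (X -> R))) :
  fold_right (fun pr acc => let '(lam, a, v) := pr in
     lam * (v (hsub x xbar) - a * hnorm x ^ 2 + a * hnorm xbar ^ 2) + acc) 0 l =
  fold_right (fun p acc => let '(lam, _, v) := p in lam * v (hsub x xbar) + acc) 0 l -
  fold_right (fun p acc => let '(lam, a, _) := p in lam * a + acc) 0 l *
     (hnorm x ^ 2 - hnorm xbar ^ 2).
Proof.
  induction l as [|[[lam a0] v] l IH]; [simpl; ring | cbn [fold_right]; rewrite IH; ring].
Qed.

Lemma group_lemma (X : Hilbert) (F G : X -> ERbar) (xbar : X) (p q : R)
  (HF : forall x, F x <> EMinf) (HG : forall x, G x <> EMinf)
  (Fp : F xbar = EFin p) (Gq : G xbar = EFin q) (l : list (R * R * (X -> R))) :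
  Forall (fun pr => let '(lam, a, v) := pr in
            0 <= lam /\ (lsc_subdiff F xbar a v \/ lsc_subdiff G xbar a v)) l ->
  exists L1 L2, 0 <= L1 /\ 0 <= L2 /\
    L1 + L2 = fold_right (fun pr acc => let '(lam, _, _) := pr in lam + acc) 0 l /\
    forall x, exists r s, ERle (EFin r) (F x) /\ ERle (EFin s) (G x) /\
      L1 * (r - p) + L2 * (s - q) >=
      fold_right (fun pr acc => let '(lam, a, v) := pr in
         lam * (v (hsub x xbar) - a * hnorm x ^ 2 + a * hnorm xbar ^ 2) + acc) 0 l.
Proof.
  induction l as [|[[lam a0] v] l IH]; intros Hl.
  - exists 0, 0. split; [lra|]. split; [lra|]. split; [simpl; lra|].
    intros x. destruct (ex_below _ (HF x)) as [r Hr].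
    destruct (ex_below _ (HG x)) as [s Hs].
    exists r, s. split; [exact Hr|]. split; [exact Hs|]. simpl; lra.
  - inversion Hl as [| ? ? Hh Ht]; subst.
    destruct Hh as [Hlam [Hs|Hs]]; destruct (IH Ht) as (L1&L2&H1&H2&H3&Hx).
    + exists (L1 + lam), L2. destruct Hs as (_&_&fx&Efx&Hfx).
      rewrite Fp in Efx; inversion Efx; subst fx.
      split; [lra|]. split; [lra|]. split; [simpl; lra|].
      intros x. destruct (Hx x) as (r&s&Hr&Hs'&Hineq).
      set (lin := v (hsub x xbar) - a0 * hnorm x ^ 2 + a0 * hnorm xbar ^ 2).
      exists (Rmax r (p + lin)), s.
      split.
      { unfold Rmax; destruct Rle_dec; [|exact Hr].
        specialize (Hfx x). unfold lin.
        replace (p + (v (hsub x xbar) - a0 * hnorm x ^ 2 + a0 * hnorm xbar ^ 2))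
          with (p + v (hsub x xbar) - a0 * hnorm x ^ 2 + a0 * hnorm xbar ^ 2) by ring.
        exact Hfx. }
      split; [exact Hs'|].
      cbn [fold_right]. fold lin.
      assert (M1 := Rmax_l r (p + lin)). assert (M2 := Rmax_r r (p + lin)).
      assert (P1 : 0 <= L1 * (Rmax r (p + lin) - r)) by (apply Rmult_le_pos; lra).
      assert (P2 : 0 <= lam * (Rmax r (p + lin) - p - lin)) by (apply Rmult_le_pos; lra).
      lra.
    + exists L1, (L2 + lam). destruct Hs as (_&_&fx&Efx&Hfx).
      rewrite Gq in Efx; inversion Efx; subst fx.
      split; [lra|]. split; [lra|]. split; [simpl; lra|].
      intros x. destruct (Hx x) as (r&s&Hr&Hs'&Hineq).
      set (lin := v (hsub x xbar) - a0 * hnorm x ^ 2 + a0 * hnorm xbar ^ 2).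
      exists r, (Rmax s (q + lin)).
      split; [exact Hr|].
      split.
      { unfold Rmax; destruct Rle_dec; [|exact Hs'].
        specialize (Hfx x). unfold lin.
        replace (q + (v (hsub x xbar) - a0 * hnorm x ^ 2 + a0 * hnorm xbar ^ 2))
          with (q + v (hsub x xbar) - a0 * hnorm x ^ 2 + a0 * hnorm xbar ^ 2) by ring.
        exact Hfx. }
      cbn [fold_right]. fold lin.
      assert (M1 := Rmax_l s (q + lin)). assert (M2 := Rmax_r s (q + lin)).
      assert (P1 : 0 <= L2 * (Rmax s (q + lin) - s)) by (apply Rmult_le_pos; lra).
      assert (P2 : 0 <= lam * (Rmax s (q + lin) - q - lin)) by (apply Rmult_le_pos; lra).
      lra.
Qed.

Theorem mainTheorem16 (X Y : Hilbert) (a : X -> Y -> ERbar)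
  (Ha_val : forall x y, a x y <> EMinf)
  (Hproper : forall y, proper (fun x => a x y))
  (Hlsc : forall y, lsc (fun x => a x y))
  (Hpara : forall y, paraconvex (fun x => a x y))
  (Hconc : forall x, concave (fun y => a x y))
  (beta : ERbar)
  (Hbeta : is_inf (fun z => exists x : X, is_sup (fun w => exists y : Y, w = a x y) z) beta)
  (Hbeta_fin : beta <> EPinf)
  (y1 y2 : Y) (xbar : X)
  (Hint1 : in_int_dom (fun x => a x y1) xbar)
  (Hint2 : in_int_dom (fun x => a x y2) xbar)
  (Hge1 : ERle beta (a xbar y1))
  (Hge2 : ERle beta (a xbar y2))
  (HZS : ZS (fun x => a x y1) (fun x => a x y2) xbar) :
  is_sup (fun z => exists y : Y, is_inf (fun w => exists x : X, w = a x y) z) beta.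
Proof.
  destruct Hbeta as [Hlow Hglb].
  assert (Weak : forall y z, is_inf (fun w => exists x, w = a x y) z -> ERle z beta).
  { intros y z [Hl _]. apply Hglb. intros s [x [Hs _]].
    apply ERle_trans with (a x y).
    - apply Hl. exists x; reflexivity.
    - apply Hs. exists y; reflexivity. }
  assert (Key : exists y0, forall x, ERle beta (a x y0)).
  { destruct beta as [b| |] eqn:Eb; [| congruence | exists y1; intros; simpl; auto].
    destruct Hint1 as [e1 [He1 D1]]. specialize (D1 xbar ltac:(rewrite norm_sub_self; lra)).
    destruct Hint2 as [e2 [He2 D2]]. specialize (D2 xbar ltac:(rewrite norm_sub_self; lra)).
    unfold dom in D1, D2.
    destruct (a xbar y1) as [p| |] eqn:Ep; [| congruence | exact (False_ind _ (Ha_val _ _ Ep))].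
    destruct (a xbar y2) as [q| |] eqn:Eq; [| congruence | exact (False_ind _ (Ha_val _ _ Eq))].
    simpl in Hge1, Hge2.
    destruct HZS as (l & Hl & Hsum & Ha & Hv).
    destruct (group_lemma X (fun x => a x y1) (fun x => a x y2) xbar p q
               (fun x => Ha_val x y1) (fun x => Ha_val x y2) Ep Eq l Hl)
      as (L1 & L2 & HL1 & HL2 & HL & Hx).
    exists (hadd (hscal L1 y1) (hscal (1 - L1) y2)).
    intros x. destruct (Hx x) as (r & s & Hr & Hs & Hineq).
    rewrite sum_lin, Hv, Ha in Hineq.
    assert (C := Hconc x y1 y2 L1 r s ltac:(lra) Hr Hs).
    apply ERle_trans with (EFin (L1 * r + (1 - L1) * s)); [|exact C].
    simpl.
    assert (P1 : L1 * b <= L1 * p) by (apply Rmult_le_compat_l; lra).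
    assert (P2 : L2 * b <= L2 * q) by (apply Rmult_le_compat_l; lra).
    replace (1 - L1) with L2 by lra. nra. }
  destruct Key as [y0 Hy0].
  assert (Inf0 : is_inf (fun w => exists x, w = a x y0) beta).
  { split.
    - intros w [x ->]. apply Hy0.
    - intros u Hu. apply Hglb. intros s [x [Hs _]].
      apply ERle_trans with (a x y0).
      + apply Hu. exists x; reflexivity.
      + apply Hs. exists y0; reflexivity. }
  split.
  - intros z [y Hz]. exact (Weak y z Hz).
  - intros u Hu. apply Hu. exists y0. exact Inf0.
Qed.
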